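(* Let $\{(y_t,x_t,f_t)\}_{t=1}^T$ be data with $y_t\in\mathbb R$, $x_t=(x_{1,t},\dots,x_{d_x,t})'\in\mathbb R^{d_x}$, $f_t\in\mathbb R^{d_f}$. Let $\mathcal A\subset\mathbb R^{2d_x}$ be compact and let $\Gamma\subset\mathbb R^{d_f}$ be compact. Let $L_j\le U_j$, $j=1,\dots,d_x$, be constants such that every $(\beta',\delta')'\in\mathcal A$ satisfies $L_j\le\delta_j\le U_j$ for all $j$. Let $M_t=\max_{\gamma\in\Gamma}|f_t'\gamma|$, fix $\epsilon>0$ and $0<\tau_1<\tau_2<1$. Original problem: minimize $$\mathbb S_T(\alpha,\gamma)=\frac1T\sum_{t=1}^T\big(y_t-x_t'\beta-x_t'\delta\,1\{f_t'\gamma>0\}\big)^2,\qquad \alpha=(\beta',\delta')',$$ over $(\alpha,\gamma)\in\mathcal A\times\Gamma$ subject to $\tau_1\le T^{-1}\sum_{t=1}^T1\{f_t'\gamma>0\}\le\tau_2$; let $(\hat\alpha,\hat\gamma)$ be a minimizer. MIQP problem: with decision variables $\beta,\delta\in\mathbb R^{d_x}$, $\gamma\in\mathbb R^{d_f}$, $d=(d_1,\dots,d_T)$ and real $\ell_{j,t}$ ($j\le d_x$, $t\le T$), minimize $$\mathbb Q_T(\beta,\ell)=\frac1T\sum_{t=1}^T\Big(y_t-x_t'\beta-\sum_{j=1}^{d_x}x_{j,t}\ell_{j,t}\Big)^2$$ subject to, for all $t$ and $j$: $(\beta,\delta)\in\mathcal A$, $\gamma\in\Gamma$, $d_t\in\{0,1\}$,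 $L_j\le\delta_j\le U_j$, $(d_t-1)(M_t+\epsilon)<f_t'\gamma\le d_tM_t$, $d_tL_j\le\ell_{j,t}\le d_tU_j$, $L_j(1-d_t)\le\delta_j-\ell_{j,t}\le U_j(1-d_t)$, and $\tau_1\le T^{-1}\sum_t d_t\le\tau_2$. Let $(\bar\beta,\bar\delta,\bar\gamma,\bar d,\bar\ell)$ be a minimizer and $\bar\alpha=(\bar\beta',\bar\delta')'$. Then $\mathbb S_T(\hat\alpha,\hat\gamma)=\mathbb S_T(\bar\alpha,\bar\gamma)$ (and this common value equals $\mathbb Q_T(\bar\beta,\bar\ell)$).
   Context: This is the mixed integer quadratic programming (MIQP) reformulation of the least-squares estimator of the two-regime regression $y_t=x_t'\beta_0+x_t'\delta_0 1\{f_t'\gamma_0>0\}+\varepsilon_t$. Both minimizers are assumed to exist. *)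

(* Defs.v *)
From Stdlib Require Import Reals.
From mathcomp Require Import all_boot.
Set Implicit Arguments. Unset Strict Implicit.

Local Open Scope R_scope.

Definition vsum (n : nat) (F : 'I_n -> R) : R := \big[Rplus/0]_(i < n) F i.
Definition dot (n : nat) (u v : 'I_n -> R) : R := vsum (fun i => u i * v i).

Definition ind_pos (z : R) : R := if Rlt_dec 0 z then 1 else 0.

(* compactness of a subset of R^n (sequential compactness, coordinatewise =
   Euclidean convergence in finite dimension) *)
Definition compact_set (n : nat) (K : ('I_n -> R) -> Prop) : Prop :=
  forall u : nat -> ('I_n -> R), (forall k, K (u k)) ->
    exists phi : nat -> nat, (forall k, (phi k < phi (Datatypes.S k))%nat) /\
      exists v, K v /\ forall i, Un_cv (fun k => u (phi k) i) (v i).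

(* alpha = (beta', delta')' in R^{2 dx} *)
Definition beta_of (dx : nat) (a : 'I_(dx + dx) -> R) : 'I_dx -> R :=
  fun j => a (lshift dx j).
Definition delta_of (dx : nat) (a : 'I_(dx + dx) -> R) : 'I_dx -> R :=
  fun j => a (rshift dx j).
Definition stack (dx : nat) (b dl : 'I_dx -> R) : 'I_(dx + dx) -> R :=
  fun i => match split i with inl j => b j | inr j => dl j end.

Definition ST (T dx df : nat) (y : 'I_T -> R) (x : 'I_T -> 'I_dx -> R)
  (f : 'I_T -> 'I_df -> R) (a : 'I_(dx + dx) -> R) (g : 'I_df -> R) : R :=
  / INR T * vsum (fun t => (y t - dot (x t) (beta_of a)
                   - dot (x t) (delta_of a) * ind_pos (dot (f t) g)) ^ 2).

Definition QT (T dx : nat) (y : 'I_T -> R) (x : 'I_T -> 'I_dx -> R)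
  (b : 'I_dx -> R) (l : 'I_dx -> 'I_T -> R) : R :=
  / INR T * vsum (fun t => (y t - dot (x t) b
                   - vsum (fun j => x t j * l j t)) ^ 2).

Definition orig_feasible (T dx df : nat) (f : 'I_T -> 'I_df -> R)
  (A : ('I_(dx + dx) -> R) -> Prop) (G : ('I_df -> R) -> Prop)
  (tau1 tau2 : R) (a : 'I_(dx + dx) -> R) (g : 'I_df -> R) : Prop :=
  A a /\ G g /\
  tau1 <= / INR T * vsum (fun t => ind_pos (dot (f t) g)) <= tau2.

Definition miqp_feasible (T dx df : nat) (f : 'I_T -> 'I_df -> R)
  (A : ('I_(dx + dx) -> R) -> Prop) (G : ('I_df -> R) -> Prop)
  (L U : 'I_dx -> R) (M : 'I_T -> R) (eps tau1 tau2 : R)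
  (b dl : 'I_dx -> R) (g : 'I_df -> R) (d : 'I_T -> R)
  (l : 'I_dx -> 'I_T -> R) : Prop :=
  A (stack b dl) /\ G g /\
  (forall t, d t = 0 \/ d t = 1) /\
  (forall j, L j <= dl j <= U j) /\
  (forall t, (d t - 1) * (M t + eps) < dot (f t) g <= d t * M t) /\
  (forall j t, d t * L j <= l j t <= d t * U j) /\
  (forall j t, L j * (1 - d t) <= dl j - l j t <= U j * (1 - d t)) /\
  tau1 <= / INR T * vsum d <= tau2.

(* Main.v *)
Require Import Defs.
From Stdlib Require Import Reals Lra FunctionalExtensionality.
From mathcomp Require Import all_boot.
Local Open Scope R_scope.

Lemma beta_stack dx (b dl : 'I_dx -> R) : beta_of (stack b dl) = b.
Proof.
apply: functional_extensionality => j; rewrite /beta_of /stack.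
by rewrite (unsplitK (inl j)).
Qed.

Lemma delta_stack dx (b dl : 'I_dx -> R) : delta_of (stack b dl) = dl.
Proof.
apply: functional_extensionality => j; rewrite /delta_of /stack.
by rewrite (unsplitK (inr j)).
Qed.

Lemma stack_of dx (a : 'I_(dx + dx) -> R) : stack (beta_of a) (delta_of a) = a.
Proof.
apply: functional_extensionality => i; rewrite /stack.
case E: (split i) => [j|j]; rewrite -(splitK i) E /=; rewrite ?/beta_of ?/delta_of; congr (a _); apply: val_inj => /=; rewrite -(splitK i) E //.
Qed.

Lemma vsum_mulr n (F : 'I_n -> R) c :
  vsum F * c = vsum (fun i => F i * c).
Proof.
rewrite /vsum; elim/big_rec2: _ => [|i y1 y2 _ <-]; lra.
Qed.

Lemma vsum_ext n (F G : 'I_n -> R) : (forall i, F i = G i) -> vsum F = vsum G.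
Proof. by move=> H; rewrite /vsum; apply: eq_bigr => i _. Qed.

Lemma miqp_eq T dx df (yy : 'I_T -> R) (xx : 'I_T -> 'I_dx -> R) f A G L U M eps tau1 tau2 b dl g d l :
  @miqp_feasible T dx df f A G L U M eps tau1 tau2 b dl g d l ->
  (forall t, d t = ind_pos (dot (f t) g)) /\
  QT yy xx b l = ST yy xx f (stack b dl) g.
Proof.
move=> [HA [HG [Hd [HLU [HM [Hl1 [Hl2 _]]]]]]].
have Hind : forall t, d t = ind_pos (dot (f t) g).
  move=> t; rewrite /ind_pos; have := HM t.
  case: (Rlt_dec 0 (dot (f t) g)) => H; case: (Hd t) => -> ? //; exfalso; nra.
split=> //.
rewrite /QT /ST beta_stack delta_stack; f_equal; apply: vsum_ext => t.
rewrite /dot vsum_mulr; do 2 f_equal; apply: vsum_ext => j.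
rewrite -Hind; have := Hl1 j t; have := Hl2 j t.
case: (Hd t) => -> ? ?.
- have -> : l j t = 0 by nra. lra.
- have -> : l j t = dl j by nra. lra.
Qed.

Arguments miqp_eq {T dx df} yy xx {f A G L U M eps tau1 tau2 b dl g d l}.

Theorem theorem1
  (T dx df : nat) (HT : (0 < T)%nat)
  (y : 'I_T -> R) (x : 'I_T -> 'I_dx -> R) (f : 'I_T -> 'I_df -> R)
  (A : ('I_(dx + dx) -> R) -> Prop) (G : ('I_df -> R) -> Prop)
  (HA : compact_set A) (HG : compact_set G)
  (L U : 'I_dx -> R) (HLU : forall j, L j <= U j)
  (HAbd : forall a, A a -> forall j, L j <= delta_of a j <= U j)
  (M : 'I_T -> R)
  (HMub : forall t g, G g -> Rabs (dot (f t) g) <= M t)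
  (HMatt : forall t, exists g, G g /\ Rabs (dot (f t) g) = M t)
  (eps tau1 tau2 : R) (Heps : 0 < eps)
  (Htau : 0 < tau1 /\ tau1 < tau2 /\ tau2 < 1)
  (ah : 'I_(dx + dx) -> R) (gh : 'I_df -> R)
  (Hhat : orig_feasible f A G tau1 tau2 ah gh /\
          forall a g, orig_feasible f A G tau1 tau2 a g ->
            ST y x f ah gh <= ST y x f a g)
  (bb db : 'I_dx -> R) (gb : 'I_df -> R) (dbar : 'I_T -> R)
  (lb : 'I_dx -> 'I_T -> R)
  (Hbar : miqp_feasible f A G L U M eps tau1 tau2 bb db gb dbar lb /\
          forall b dl g d l, miqp_feasible f A G L U M eps tau1 tau2 b dl g d l ->
            QT y x bb lb <= QT y x b l) :
  ST y x f ah gh = ST y x f (stack bb db) gb /\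
  ST y x f (stack bb db) gb = QT y x bb lb.
Proof.
case: Hhat => Hhf Hhmin; case: Hbar => Hbf Hbmin.
have [Hind Heq] := miqp_eq y x Hbf.
have H1 : ST y x f ah gh <= ST y x f (stack bb db) gb.
  apply: Hhmin; case: Hbf => [HAb [HGb [_ [_ [_ [_ [_ Htb]]]]]]].
  split=> //; split=> //.
  by rewrite -(@vsum_ext _ _ _ Hind).
have Hmf : miqp_feasible f A G L U M eps tau1 tau2 (beta_of ah) (delta_of ah) gh
   (fun t => ind_pos (dot (f t) gh))
   (fun j t => ind_pos (dot (f t) gh) * delta_of ah j).
  case: Hhf => [HAh [HGh Hth]].
  have Hb := HAbd _ HAh.
  split; first by rewrite (@stack_of _ ah).
  split=> //.
  split; first by move=> t; rewrite /ind_pos; by case: Rlt_dec => ?; [right|left].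
  split=> //.
  split.
    move=> t; have := HMub t _ HGh; rewrite /ind_pos.
    case: Rlt_dec => H Hab /=.
    + have := Rle_abs (dot (f t) gh); lra.
    + have := Rle_abs (- dot (f t) gh); rewrite Rabs_Ropp; nra.
  split.
    move=> j t; have := Hb j; rewrite /ind_pos; case: Rlt_dec => ? ? /=; lra.
  split; first by move=> j t; have := Hb j; rewrite /ind_pos; case: Rlt_dec => ? ? /=; lra.
  exact: Hth.
have [_ Heq2] := miqp_eq y x Hmf.
have H2 := Hbmin _ _ _ _ _ Hmf.
rewrite Heq2 (@stack_of _ ah) in H2.
split; lra.
Qed.
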